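(* Let $G$ be a graph and $\ell\ge 2$. Then $\overline{G\cup K_1}$ is $N$-AW if and only if $G$ is $A$-AW.
   Context: All graphs are finite and simple; $\overline{H}$ is the complement of $H$ and $G\cup K_1$ is the disjoint union of $G$ with a single new vertex. Labels lie in $\mathbb{Z}_\ell$. In the neighborhood Lights Out game, toggling a vertex $v$ adds $1$ (mod $\ell$) to the label of every vertex of the closed neighborhood $N[v]$; in the adjacency Lights Out game, toggling $v$ adds $1$ to the label of every vertex of the open neighborhood $N(v)$ (and not to $v$ itself). A game is won when all labels are $0$. A graph is $N$-AW (resp. $A$-AW) if the neighborhood (resp. adjacency) game can be won from every initial labeling $V\to\mathbb{Z}_\ell$; equivalently $A+I$ (resp. the adjacency matrix $A$) is invertible over $\mathbb{Z}_\ell$. *)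

(* Defs.v *)
From mathcomp Require Import all_boot all_order all_algebra.
Set Implicit Arguments. Unset Strict Implicit. Unset Printing Implicit Defensive.
Import GRing.Theory.
Local Open Scope ring_scope.

Definition simple_graph (T : finType) (e : rel T) : Prop :=
  symmetric e /\ irreflexive e.

Definition compl_graph (T : finType) (e : rel T) : rel T :=
  fun x y => (x != y) && ~~ e x y.

Definition union_K1 (T : finType) (e : rel T) : rel (option T) :=
  fun x y => match x, y with
             | Some u, Some v => e u v
             | _, _ => false
             end.

(* Neighborhood Lights Out: toggling v adds 1 to every vertex of N[v]. *)
Definition toggleN (l : nat) (T : finType) (e : rel T)
  (f : T -> 'Z_l) (v : T) : T -> 'Z_l :=
  fun w => f w + ((w == v) || e v w)%:R.

(* Adjacency Lights Out: toggling v adds 1 to every vertex of N(v). *)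
Definition toggleA (l : nat) (T : finType) (e : rel T)
  (f : T -> 'Z_l) (v : T) : T -> 'Z_l :=
  fun w => f w + (e v w)%:R.

Definition playN l (T : finType) (e : rel T) (s : seq T) (f : T -> 'Z_l) :=
  foldl (@toggleN l T e) f s.
Definition playA l (T : finType) (e : rel T) (s : seq T) (f : T -> 'Z_l) :=
  foldl (@toggleA l T e) f s.

Definition N_AW (l : nat) (T : finType) (e : rel T) : Prop :=
  forall f : T -> 'Z_l, exists s : seq T, forall w, playN e s f w = 0.
Definition A_AW (l : nat) (T : finType) (e : rel T) : Prop :=
  forall f : T -> 'Z_l, exists s : seq T, forall w, playA e s f w = 0.

(* Main.v *)
Require Import Defs.
From mathcomp Require Import all_boot all_order all_algebra.
From mathcomp Require Import ring.
Import GRing.Theory.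
Local Open Scope ring_scope.

Lemma sum_opt (R : nmodType) (T : finType) (F : option T -> R) :
  \sum_(x : option T) F x = F None + \sum_(u : T) F (Some u).
Proof.
rewrite (bigD1 None) //=; congr (_ + _).
rewrite (reindex_omap Some id) /=; last by case.
by apply: eq_bigl => j; rewrite eqxx.
Qed.

Lemma play_sum (R : nmodType) (T : Type) (g : T -> T -> R)
  (t : (T -> R) -> T -> T -> R) :
  (forall f v w, t f v w = f w + g v w) ->
  forall s f w, foldl t f s w = f w + \sum_(x <- s) g x w.
Proof.
move=> Ht; elim=> [|x s IH] f w /=; first by rewrite big_nil addr0.
by rewrite IH Ht big_cons addrA.
Qed.

Lemma sum_seq_count (R : nzRingType) (T : finType) (G : T -> R) (s : seq T) :
  \sum_(x <- s) G x = \sum_v (count_mem v s)%:R * G v.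
Proof.
elim: s => [|x s IH]; first by rewrite big_nil big1 // => v _; rewrite mul0r.
rewrite big_cons IH /= [RHS](eq_bigr (fun v => (v == x)%:R * G v +
   (count_mem v s)%:R * G v)); last first.
  by move=> v _ /=; rewrite natrD mulrDl (eq_sym x).
rewrite big_split /=; congr (_ + _).
rewrite (bigD1 x) //= eqxx mul1r big1 ?addr0 // => v /negbTE ->.
by rewrite mul0r.
Qed.

Lemma count_exists (T : finType) (c : T -> nat) :
  exists s : seq T, forall v, count_mem v s = c v.
Proof.
exists (flatten [seq nseq (c u) u | u <- enum T]) => v.
rewrite count_flatten -map_comp sumnE big_map /=.
under eq_bigr do rewrite count_nseq /=.
rewrite big_enum /= (bigD1 v) //= eqxx mul1n big1 ?addn0 // => u /negbTE ->.
by rewrite mul0n.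
Qed.


Lemma win_surj l (T : finType) (g : T -> T -> 'Z_l)
  (t : (T -> 'Z_l) -> T -> T -> 'Z_l) :
  (forall f v w, t f v w = f w + g v w) ->
  ((forall f : T -> 'Z_l, exists s, forall w, foldl t f s w = 0) <->
   (forall b : T -> 'Z_l, exists y : T -> 'Z_l,
       forall w, \sum_v y v * g v w = b w)).
Proof.
move=> Ht; split => H b.
  have [s Hs] := H (fun w => - b w).
  exists (fun v => (count_mem v s)%:R) => w.
  have := Hs w; rewrite (@play_sum _ _ _ _ Ht) sum_seq_count => /eqP.
  by rewrite addrC addr_eq0 opprK => /eqP.
have [y Hy] := H (fun w => - b w).
have [s Hs] := @count_exists _ (fun v => val (y v)).
exists s => w; rewrite (@play_sum _ _ _ _ Ht) sum_seq_count.
under eq_bigr do rewrite Hs natr_Zp.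
by rewrite Hy addrN.
Qed.

Theorem theorem2p6 (l : nat) (T : finType) (e : rel T) :
  (1 < l)%N -> simple_graph e ->
  (N_AW l (compl_graph (union_K1 e)) <-> A_AW l e).
Proof.
move=> _ [esym eirr].
set E := compl_graph (union_K1 e).
have HN := @win_surj l _ (fun v w => ((w == v) || E v w)%:R) (@toggleN l _ E)
  (fun f v w => erefl).
have HA := @win_surj l _ (fun v w => (e v w)%:R) (@toggleA l _ e)
  (fun f v w => erefl).
rewrite /N_AW /A_AW /playN /playA.
have g00 : ((None == None :> option T) || E None None)%:R = 1 :> 'Z_l by [].
have gN1 : forall u : T, ((None == Some u) || E (Some u) None)%:R = 1 :> 'Z_l by [].
have g1N : forall u : T, ((Some u == None) || E None (Some u))%:R = 1 :> 'Z_l by [].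
have gSS : forall u w : T,
  ((Some w == Some u) || E (Some u) (Some w))%:R = 1 - (e u w)%:R :> 'Z_l.
  move=> u w; rewrite /E /compl_graph /=.
  have -> : (Some w == Some u) = (w == u) by [].
  have -> : (Some u != Some w) = (u != w) by [].
  case: (eqVneq w u) => [->|nwu]; first by rewrite eirr subr0.
  rewrite /=.
  by case: (e u w); rewrite /= ?subrr ?subr0.
split.
  move=> HN0; apply HA.2 => c.
  have [y Hy] := HN.1 HN0 (fun x => if x is Some w then - c w else 0).
  exists (fun u => y (Some u)) => w.
  have h1 := Hy None; have h2 := Hy (Some w).
  rewrite sum_opt g00 in h1; rewrite sum_opt g1N in h2.
  have e1 : \sum_u y (Some u) * ((None == Some u) || E (Some u) None)%:R
     = \sum_u y (Some u) by apply: eq_bigr => u _; rewrite gN1 mulr1.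
  have e2 : \sum_u y (Some u) * ((Some w == Some u) || E (Some u) (Some w))%:R
     = \sum_u (y (Some u) - y (Some u) * (e u w)%:R).
    by apply: eq_bigr => u _; rewrite gSS mulrBr mulr1.
  rewrite e1 in h1; rewrite e2 in h2.
  rewrite sumrB mulr1 in h2; rewrite mulr1 in h1.
  apply: oppr_inj; rewrite -h2.
  have -> : y None = - \sum_u y (Some u) by apply/eqP; rewrite -addr_eq0 h1.
  ring.
move=> HA0; apply HN.2 => b.
have [z Hz] := HA.1 HA0 (fun w => b None - b (Some w)).
exists (fun x => if x is Some u then z u else b None - \sum_u z u).
case=> [w|]; rewrite sum_opt.
  have e2 : \sum_u z u * ((Some w == Some u) || E (Some u) (Some w))%:R
     = \sum_u (z u - z u * (e u w)%:R).
    by apply: eq_bigr => u _; rewrite gSS mulrBr mulr1.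
  rewrite g1N /= e2 sumrB Hz; ring.
have e1 : \sum_u z u * ((None == Some u) || E (Some u) None)%:R
   = \sum_u z u by apply: eq_bigr => u _; rewrite gN1 mulr1.
rewrite g00 /= e1; ring.
Qed.
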